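(* For $i=1,2$ let $\alpha_i\in[-1,1]$ and let $f_{\alpha_i}=h_i+\overline{g_i}\in S_H$ with $h_i(z)+g_i(z)=\dfrac{z(1-\alpha_i z)}{1-z^2}$, with dilatations $\omega_i=g_i'/h_i'$. If $\Re\big((1-\omega_1(z)\overline{\omega_2(z)})\,h_1'(z)\overline{h_2'(z)}\big)>0$ for all $z\in E$, then for every $0\le t\le1$ the map $f=tf_{\alpha_1}+(1-t)f_{\alpha_2}$ belongs to $S_H$ and maps $E$ onto a domain convex in the direction of the imaginary axis.
   Context: $E=\{z\in\mathbb{C}:|z|<1\}$. For a harmonic mapping $f=h+\overline{g}$ on $E$ with $h,g$ analytic, the dilatation is $\omega=g'/h'$. $S_H$ denotes the class of harmonic, univalent, sense-preserving mappings $f=h+\overline{g}$ of $E$ ($h'\ne0$, $|\omega|<1$) normalized by $f(0)=0$, $f_z(0)=1$. A domain $\Omega$ is convex in the direction of the imaginary axis if every line parallel to the imaginary axis has connected or empty intersection with $\Omega$. *)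

(* Defs.v *)
From Stdlib Require Import Reals Lra.
Open Scope R_scope.

Record Cx := mkC { Re : R ; Im : R }.

Definition Cadd (z w : Cx) : Cx := mkC (Re z + Re w) (Im z + Im w).
Definition Csub (z w : Cx) : Cx := mkC (Re z - Re w) (Im z - Im w).
Definition Cmul (z w : Cx) : Cx :=
  mkC (Re z * Re w - Im z * Im w) (Re z * Im w + Im z * Re w).
Definition Cconj (z : Cx) : Cx := mkC (Re z) (- Im z).
Definition Cnorm2 (z : Cx) : R := Re z * Re z + Im z * Im z.
Definition Cabs (z : Cx) : R := sqrt (Cnorm2 z).
Definition Cinv (z : Cx) : Cx := mkC (Re z / Cnorm2 z) (- Im z / Cnorm2 z).
Definition Cdiv (z w : Cx) : Cx := Cmul z (Cinv w).
Definition RtoC (r : R) : Cx := mkC r 0.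
Definition Cx0 : Cx := RtoC 0.
Definition Cx1 : Cx := RtoC 1.

Definition inE (z : Cx) : Prop := Cabs z < 1.

Definition has_cderiv (f : Cx -> Cx) (z l : Cx) : Prop :=
  forall eps, 0 < eps -> exists del, 0 < del /\
    forall w, Cabs (Csub w z) < del ->
      Cabs (Csub (Csub (f w) (f z)) (Cmul l (Csub w z))) <= eps * Cabs (Csub w z).

Definition analytic_on_E (h h' : Cx -> Cx) : Prop :=
  forall z, inE z -> has_cderiv h z (h' z).

Definition harm (h g : Cx -> Cx) (z : Cx) : Cx := Cadd (h z) (Cconj (g z)).

Definition dilat (h' g' : Cx -> Cx) (z : Cx) : Cx := Cdiv (g' z) (h' z).

Definition in_SH (h g h' g' : Cx -> Cx) : Prop :=
  analytic_on_E h h' /\ analytic_on_E g g' /\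
  (forall z, inE z -> h' z <> Cx0) /\
  (forall z, inE z -> Cabs (dilat h' g' z) < 1) /\
  (forall z1 z2, inE z1 -> inE z2 -> harm h g z1 = harm h g z2 -> z1 = z2) /\
  harm h g Cx0 = Cx0 /\
  h' Cx0 = Cx1.

(* Omega is convex in the direction of the imaginary axis: the intersection
   with every vertical line is empty or connected (i.e. an interval). *)
Definition convex_imag_dir (Om : Cx -> Prop) : Prop :=
  forall w1 w2, Om w1 -> Om w2 -> Re w1 = Re w2 ->
    forall s, 0 <= s <= 1 -> Om (mkC (Re w1) (s * Im w1 + (1 - s) * Im w2)).

Definition image_E (F : Cx -> Cx) (w : Cx) : Prop := exists z, inE z /\ F z = w.

Definition strip_map (a : R) (z : Cx) : Cx :=
  Cdiv (Cmul z (Csub Cx1 (Cmul (RtoC a) z))) (Csub Cx1 (Cmul z z)).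

Definition lincomb (t : R) (u v : Cx -> Cx) (z : Cx) : Cx :=
  Cadd (Cmul (RtoC t) (u z)) (Cmul (RtoC (1 - t)) (v z)).

(* Main.v *)
From Stdlib Require Import Reals Lra.
From Coquelicot Require Import Coquelicot.
Require Import Defs.
Open Scope R_scope.

Definition toC (z : Cx) : C := (Re z, Im z).

Lemma toC_inj z w : toC z = toC w -> z = w.
Proof. destruct z, w; unfold toC; simpl; intros H; inversion H; auto. Qed.

Lemma toC_add z w : toC (Cadd z w) = (toC z + toC w)%C.
Proof. reflexivity. Qed.
Lemma toC_sub z w : toC (Csub z w) = (toC z - toC w)%C.
Proof. unfold toC, Csub, Cminus, Cplus, Copp; simpl; f_equal; ring. Qed.
Lemma toC_mul z w : toC (Cmul z w) = (toC z * toC w)%C.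
Proof. reflexivity. Qed.
Lemma toC_conj z : toC (Defs.Cconj z) = Complex.Cconj (toC z).
Proof. reflexivity. Qed.
Lemma toC_inv z : toC (Defs.Cinv z) = Complex.Cinv (toC z).
Proof. unfold toC, Defs.Cinv, Complex.Cinv, Cnorm2; simpl. f_equal; f_equal; f_equal; ring. Qed.
Lemma toC_div z w : toC (Cdiv z w) = (toC z / toC w)%C.
Proof. unfold Cdiv, Cdiv. rewrite toC_mul, toC_inv. reflexivity. Qed.
Lemma toC_R r : toC (Defs.RtoC r) = Complex.RtoC r.
Proof. reflexivity. Qed.
Lemma toC_0 : toC Cx0 = 0%C.
Proof. reflexivity. Qed.
Lemma toC_1 : toC Cx1 = 1%C.
Proof. reflexivity. Qed.
Lemma Cabs_toC z : Cabs z = Cmod (toC z).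
Proof. unfold Cabs, Cmod, Cnorm2, toC; simpl. f_equal; ring. Qed.
Lemma Re_toC z : Re z = fst (toC z).
Proof. reflexivity. Qed.
Lemma Im_toC z : Im z = snd (toC z).
Proof. reflexivity. Qed.

Ltac tc := repeat (rewrite ?toC_add, ?toC_sub, ?toC_mul, ?toC_conj, ?toC_div,
   ?toC_inv, ?toC_R, ?toC_0, ?toC_1).

Lemma cderiv_lin f g l m z al be : has_cderiv f z l -> has_cderiv g z m ->
  has_cderiv (fun w => Cadd (Cmul (Defs.RtoC al) (f w)) (Cmul (Defs.RtoC be) (g w))) z
    (Cadd (Cmul (Defs.RtoC al) l) (Cmul (Defs.RtoC be) m)).
Proof.
  intros Hf Hg eps Heps.
  set (M := Rabs al + Rabs be + 1).
  assert (HM : 0 < M) by (unfold M; pose proof (Rabs_pos al); pose proof (Rabs_pos be); lra).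
  destruct (Hf (eps / M)) as [d1 [Hd1 H1]]. apply Rdiv_lt_0_compat; lra.
  destruct (Hg (eps / M)) as [d2 [Hd2 H2]]. apply Rdiv_lt_0_compat; lra.
  exists (Rmin d1 d2). split. apply Rmin_pos; auto.
  intros w Hw.
  assert (Hw1 : Cabs (Csub w z) < d1) by (eapply Rlt_le_trans; [exact Hw| apply Rmin_l]).
  assert (Hw2 : Cabs (Csub w z) < d2) by (eapply Rlt_le_trans; [exact Hw| apply Rmin_r]).
  specialize (H1 w Hw1). specialize (H2 w Hw2).
  rewrite !Cabs_toC in *. tc. tc.
  set (E1 := (toC (f w) - toC (f z) - toC l * (toC w - toC z))%C) in *.
  set (E2 := (toC (g w) - toC (g z) - toC m * (toC w - toC z))%C) in *.
  replace (Complex.RtoC al * toC (f w) + Complex.RtoC be * toC (g w) -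
     (Complex.RtoC al * toC (f z) + Complex.RtoC be * toC (g z)) -
     (Complex.RtoC al * toC l + Complex.RtoC be * toC m) * (toC w - toC z))%C
   with (Complex.RtoC al * E1 + Complex.RtoC be * E2)%C by (unfold E1, E2; ring).
  eapply Rle_trans. apply Cmod_triangle. rewrite !Cmod_mult, !Cmod_R.
  set (D := Cmod (toC w - toC z)) in *.
  assert (0 <= D) by apply Cmod_ge_0.
  pose proof (Rabs_pos al); pose proof (Rabs_pos be).
  assert (Hk : Rabs al * (eps / M * D) + Rabs be * (eps / M * D) <= eps * D).
  { replace (Rabs al * (eps / M * D) + Rabs be * (eps / M * D)) with
      ((Rabs al + Rabs be) / M * (eps * D)) by (field; lra).
    rewrite <- (Rmult_1_l (eps * D)) at 2. apply Rmult_le_compat_r. apply Rmult_le_pos; lra.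
    apply Rmult_le_reg_r with M; auto. unfold Rdiv. rewrite Rmult_assoc, Rinv_l; unfold M; lra. }
  eapply Rle_trans; [|exact Hk].
  apply Rplus_le_compat; apply Rmult_le_compat_l; auto.
Qed.

Lemma Cmod_le_2 (z : C) : Cmod z <= 2 * Rmax (Rabs (fst z)) (Rabs (snd z)).
Proof.
  eapply Rle_trans. apply Cmod_2Rmax. apply Rmult_le_compat_r.
  eapply Rle_trans. apply Rabs_pos. apply Rmax_l.
  assert (sqrt 2 <= sqrt 4) by (apply sqrt_le_1_alt; lra).
  replace 4 with (2*2) in H by ring. rewrite sqrt_square in H; lra.
Qed.

Lemma Cmod_RtoC_mul (a : C) (h : R) : Cmod (a * Complex.RtoC h)%C = Cmod a * Rabs h.
Proof. rewrite Cmod_mult, Cmod_R. reflexivity. Qed.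

Lemma deriv_comp_bound x y x' y' t :
  derivable_pt_lim x t x' -> derivable_pt_lim y t y' ->
  forall eta, 0 < eta -> exists del, 0 < del /\ forall h, Rabs h < del ->
   Cmod ((x (t+h)%R, y (t+h)%R) - (x t, y t) - (x', y') * Complex.RtoC h)%C <= 2 * eta * Rabs h.
Proof.
  intros Hx Hy eta He.
  destruct (Hx eta He) as [dx Hdx]. destruct (Hy eta He) as [dy Hdy].
  exists (Rmin dx dy). split. apply Rmin_pos; apply cond_pos.
  intros h Hh.
  destruct (Req_dec h 0) as [->|Hn].
  { rewrite Rplus_0_r. rewrite Rabs_R0.
    match goal with |- Cmod ?e <= _ => replace e with (Complex.RtoC 0) by (apply injective_projections; simpl; ring) end.
    rewrite Cmod_0. lra. }
  assert (H1 : Rabs h < dx) by (eapply Rlt_le_trans; [exact Hh| apply Rmin_l]).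
  assert (H2 : Rabs h < dy) by (eapply Rlt_le_trans; [exact Hh| apply Rmin_r]).
  specialize (Hdx h Hn H1). specialize (Hdy h Hn H2).
  eapply Rle_trans. apply Cmod_le_2.
  rewrite Rmult_assoc. apply Rmult_le_compat_l. lra.
  assert (Ha : forall u v w, h <> 0 -> Rabs ((u - v)/h - w) < eta -> Rabs (u - v - w * h) <= eta * Rabs h).
  { intros u v w Hh0 Hl.
    replace (u - v - w*h) with (((u-v)/h - w) * h) by (field; auto).
    rewrite Rabs_mult. apply Rmult_le_compat_r. apply Rabs_pos. lra. }
  apply Rmax_lub; simpl.
  - apply Rle_trans with (Rabs (x (t+h) - x t - x' * h)); [right; f_equal; ring| apply Ha; auto].
  - apply Rle_trans with (Rabs (y (t+h) - y t - y' * h)); [right; f_equal; ring| apply Ha; auto].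
Qed.

Lemma chain_core (H : Cx -> Cx) L x y x' y' t :
  derivable_pt_lim x t x' -> derivable_pt_lim y t y' ->
  has_cderiv H (mkC (x t) (y t)) L ->
  forall eps, 0 < eps -> exists del, 0 < del /\ forall h, Rabs h < del ->
   Cmod (toC (H (mkC (x (t+h)%R) (y (t+h)%R))) - toC (H (mkC (x t) (y t)))
         - (toC L * (x', y')) * Complex.RtoC h)%C <= eps * Rabs h.
Proof.
  intros Hx Hy HH eps Heps.
  set (cG := Cmod (x', y')). set (cL := Cmod (toC L)).
  assert (HcG : 0 <= cG) by apply Cmod_ge_0. assert (HcL : 0 <= cL) by apply Cmod_ge_0.
  set (eta := Rmin 1 (eps / (4 * (cL + 1)))).
  assert (Heta : 0 < eta) by (apply Rmin_pos; [lra| apply Rdiv_lt_0_compat; lra]).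
  assert (Heta1 : eta <= 1) by apply Rmin_l.
  assert (Heta2 : eta * (4 * (cL + 1)) <= eps).
  { apply Rle_trans with (eps / (4 * (cL + 1)) * (4 * (cL + 1))).
    apply Rmult_le_compat_r. lra. apply Rmin_r. right; field; lra. }
  destruct (deriv_comp_bound x y x' y' t Hx Hy eta Heta) as [d1 [Hd1 Hb]].
  set (eps1 := eps / (2 * (cG + 2))).
  assert (He1 : 0 < eps1) by (apply Rdiv_lt_0_compat; lra).
  destruct (HH eps1 He1) as [dH [HdH HHb]].
  exists (Rmin d1 (dH / (cG + 3))). split.
  { apply Rmin_pos; auto. apply Rdiv_lt_0_compat; lra. }
  intros h Hh.
  assert (Hh1 : Rabs h < d1) by (eapply Rlt_le_trans; [exact Hh| apply Rmin_l]).
  assert (Hh2 : Rabs h < dH / (cG + 3)) by (eapply Rlt_le_trans; [exact Hh| apply Rmin_r]).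
  specialize (Hb h Hh1).
  pose proof (Rabs_pos h) as Hph.
  set (g1 := ((x (t+h)%R, y (t+h)%R) : C)) in *.
  set (g0 := ((x t, y t) : C)) in *.
  set (G := ((x', y') : C)) in *.
  set (e := (g1 - g0 - G * Complex.RtoC h)%C) in *.
  assert (Hd : Cmod (g1 - g0) <= (cG + 2) * Rabs h).
  { replace (g1 - g0)%C with (G * Complex.RtoC h + e)%C by (unfold e; ring).
    eapply Rle_trans. apply Cmod_triangle. rewrite Cmod_RtoC_mul. fold cG. nra. }
  assert (Hd2 : Cabs (Csub (mkC (x (t+h)%R) (y (t+h)%R)) (mkC (x t) (y t))) < dH).
  { rewrite Cabs_toC, toC_sub. change (Cmod (g1 - g0) < dH).
    eapply Rle_lt_trans. exact Hd.
    apply Rle_lt_trans with ((cG + 3) * Rabs h). nra.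
    apply Rmult_lt_reg_r with (/ (cG + 3)). apply Rinv_0_lt_compat; lra.
    replace ((cG + 3) * Rabs h * / (cG + 3)) with (Rabs h) by (field; lra). exact Hh2. }
  specialize (HHb _ Hd2).
  rewrite !Cabs_toC, !toC_sub, toC_mul, toC_sub in HHb.
  change (Cmod (toC (H (mkC (x (t + h)%R) (y (t + h)%R))) - toC (H (mkC (x t) (y t))) -
            toC L * (g1 - g0)) <= eps1 * Cmod (g1 - g0)) in HHb.
  set (D1 := (toC (H (mkC (x (t + h)%R) (y (t + h)%R))) - toC (H (mkC (x t) (y t))) -
            toC L * (g1 - g0))%C) in *.
  replace (toC (H (mkC (x (t + h)%R) (y (t + h)%R))) - toC (H (mkC (x t) (y t))) -
     toC L * G * Complex.RtoC h)%C with (D1 + toC L * e)%C by (unfold D1, e; ring).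
  eapply Rle_trans. apply Cmod_triangle. rewrite Cmod_mult. fold cL.
  assert (A1 : Cmod D1 <= eps / 2 * Rabs h).
  { eapply Rle_trans. exact HHb.
    apply Rle_trans with (eps1 * ((cG + 2) * Rabs h)).
    apply Rmult_le_compat_l; lra.
    right. unfold eps1. field. lra. }
  assert (A2 : cL * Cmod e <= eps / 2 * Rabs h).
  { apply Rle_trans with (cL * (2 * eta * Rabs h)). apply Rmult_le_compat_l; lra.
    nra. }
  lra.
Qed.

Lemma im_le_Cmod' (c : C) : Rabs (snd c) <= Cmod c.
Proof. eapply Rle_trans; [|apply Rmax_Cmod]. apply Rmax_r. Qed.
Lemma re_le_Cmod' (c : C) : Rabs (fst c) <= Cmod c.
Proof. eapply Rle_trans; [|apply Rmax_Cmod]. apply Rmax_l. Qed.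

Lemma chain_rule (H : Cx -> Cx) L x y x' y' t :
  derivable_pt_lim x t x' -> derivable_pt_lim y t y' ->
  has_cderiv H (mkC (x t) (y t)) L ->
  derivable_pt_lim (fun s => Re (H (mkC (x s) (y s)))) t (Re (Cmul L (mkC x' y'))) /\
  derivable_pt_lim (fun s => Im (H (mkC (x s) (y s)))) t (Im (Cmul L (mkC x' y'))).
Proof.
  intros Hx Hy HH. split; intros eps Heps;
  destruct (chain_core H L x y x' y' t Hx Hy HH (eps/2)) as [d [Hd Hb]]; try lra;
  exists (mkposreal d Hd); intros h Hn Hh; specialize (Hb h Hh); simpl in Hh.
  - pose proof (re_le_Cmod' (toC (H (mkC (x (t + h)%R) (y (t + h)%R))) - toC (H (mkC (x t) (y t)))
         - (toC L * (x', y')) * Complex.RtoC h)%C) as Hr.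
    simpl in Hr.
    replace ((Re (H {| Re := x (t + h); Im := y (t + h) |}) - Re (H {| Re := x t; Im := y t |})) / h -
       Re (Cmul L {| Re := x'; Im := y' |})) with
       ((Re (H {| Re := x (t + h); Im := y (t + h) |}) + - Re (H {| Re := x t; Im := y t |}) +
      - ((Re L * x' - Im L * y') * h - (Re L * y' + Im L * x') * 0)) / h) by (simpl; field; auto).
    rewrite Rabs_div by auto.
    apply Rmult_lt_reg_r with (Rabs h). apply Rabs_pos_lt; auto.
    unfold Rdiv. rewrite Rmult_assoc, Rinv_l by (apply Rabs_no_R0; auto).
    assert (0 < Rabs h) by (apply Rabs_pos_lt; auto). nra.
  - pose proof (im_le_Cmod' (toC (H (mkC (x (t + h)%R) (y (t + h)%R))) - toC (H (mkC (x t) (y t)))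
         - (toC L * (x', y')) * Complex.RtoC h)%C) as Hr.
    simpl in Hr.
    replace ((Im (H {| Re := x (t + h); Im := y (t + h) |}) - Im (H {| Re := x t; Im := y t |})) / h -
       Im (Cmul L {| Re := x'; Im := y' |})) with
       ((Im (H {| Re := x (t + h); Im := y (t + h) |}) + - Im (H {| Re := x t; Im := y t |}) +
      - ((Re L * x' - Im L * y') * 0 + (Re L * y' + Im L * x') * h)) / h) by (simpl; field; auto).
    rewrite Rabs_div by auto.
    apply Rmult_lt_reg_r with (Rabs h). apply Rabs_pos_lt; auto.
    unfold Rdiv. rewrite Rmult_assoc, Rinv_l by (apply Rabs_no_R0; auto).
    assert (0 < Rabs h) by (apply Rabs_pos_lt; auto). nra.
Qed.

Definition sT (t : R) := 1 + t * t.
Definition denC (v t : R) := (v + 1) * (v + 1) + (v * t) * (v * t).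
Definition gam (u : R -> R) (t : R) : Cx :=
  mkC ((u t * u t * sT t - 1) / denC (u t) t) (2 * u t * t / denC (u t) t).
Definition psi (a : R) (u : R -> R) (t : R) := t * ((1 - a) * u t + (1 + a) / (u t * sT t)) / 4.

Lemma div_lt1 a b : 0 < b -> a < b -> a / b < 1.
Proof. intros. apply Rmult_lt_reg_r with b; auto. unfold Rdiv. rewrite Rmult_assoc, Rinv_l; lra. Qed.

Lemma sqrt_lt1 x : 0 <= x -> x < 1 -> sqrt x < 1.
Proof. intros. rewrite <- sqrt_1. apply sqrt_lt_1_alt. lra. Qed.

Lemma sT_pos t : 0 < sT t.
Proof. unfold sT. nra. Qed.
Lemma denC_pos v t : 0 < v -> 0 < denC v t.
Proof. unfold denC. nra. Qed.

Lemma gam_inE u t : 0 < u t -> inE (gam u t).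
Proof.
  intros Hu. unfold inE, Cabs, Cnorm2, gam; simpl.
  pose proof (denC_pos _ t Hu) as Hd. pose proof (sT_pos t).
  apply sqrt_lt1. apply Rplus_le_le_0_compat; apply Rle_0_sqr.
  set (v := u t) in *. unfold sT in *.
  replace ((v * v * (1 + t * t) - 1) / denC v t * ((v * v * (1 + t * t) - 1) / denC v t) +
    2 * v * t / denC v t * (2 * v * t / denC v t)) with
    (((v * v * (1 + t * t) - 1) * (v * v * (1 + t * t) - 1) + (2*v*t)*(2*v*t)) / (denC v t * denC v t))
    by (field; lra).
  apply div_lt1. nra. unfold denC in *. nra.
Qed.

Open Scope C_scope.
Lemma S_w (a : R) (w : C) : w <> 0 -> w + 1 <> 0 ->
  let z := (w - 1) / (w + 1) in
  (z * (1 - Complex.RtoC a * z)) / (1 - z * z) =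
  (Complex.RtoC (1 - a) * w - Complex.RtoC (1 + a) / w) / 4 + Complex.RtoC a / 2.
Proof.
  intros Hw Hw1 z. unfold z.
  assert (H4 : (w + 1) * (w + 1) - (w - 1) * (w - 1) <> 0).
  { replace ((w + 1) * (w + 1) - (w - 1) * (w - 1)) with (4 * w) by ring.
    assert (H40 : (4 : C) <> 0) by (intro H'; inversion H'; lra).
    intro H. apply Hw. replace w with ((4 * w) / 4) by (field; auto).
    rewrite H. field. }
  rewrite !RtoC_minus, !RtoC_plus.
  field. repeat split; auto.
Qed.
Close Scope C_scope.

Lemma gam_C u t : 0 < u t ->
  toC (gam u t) = ((((u t, (u t * t)%R) : C) - 1) / (((u t, (u t * t)%R) : C) + 1))%C.
Proof.
  intros Hu. set (w := ((u t, (u t * t)%R) : C)).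
  assert (Hw1 : (w + 1)%C <> 0%C).
  { intro H. apply (f_equal fst) in H. unfold w in H. simpl in H. lra. }
  assert (E : (toC (gam u t) * (w + 1))%C = (w - 1)%C).
  { pose proof (denC_pos _ t Hu). unfold w, gam, toC, denC, sT in *; simpl.
    apply injective_projections; simpl; field; lra. }
  rewrite <- E. field. auto.
Qed.

Lemma gam_strip a K u t : 0 < u t ->
  (1 - a) * u t * u t - K * u t - (1 + a) / sT t = 0 ->
  strip_map a (gam u t) = mkC (K / 4 + a / 2) (psi a u t).
Proof.
  intros Hu HQ. apply toC_inj. unfold strip_map. tc. rewrite gam_C by auto.
  set (w := ((u t, (u t * t)%R) : C)).
  assert (Hw1 : (w + 1)%C <> 0%C).
  { intro H. apply (f_equal fst) in H. unfold w in H. simpl in H. lra. }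
  assert (Hw : w <> 0%C).
  { intro H. apply (f_equal fst) in H. unfold w in H. simpl in H. lra. }
  pose proof (S_w a w Hw Hw1) as HS. simpl in HS. rewrite HS.
  pose proof (sT_pos t).
  assert (HK : K = (1 - a) * u t - (1 + a) / (u t * sT t)).
  { apply Rmult_eq_reg_r with (u t). 2: lra.
    replace (((1 - a) * u t - (1 + a) / (u t * sT t)) * u t) with
      ((1 - a) * u t * u t - (1 + a) / sT t) by (field; lra). lra. }
  unfold toC, psi, w, sT in *; simpl. rewrite HK.
  apply injective_projections; simpl; field; nra.
Qed.

Lemma dr_ex f t : ex_derive f t -> exists d, derivable_pt_lim f t d.
Proof. intros H. exists (Derive f t). apply is_derive_Reals. apply Derive_correct. auto. Qed.

Lemma gam_deriv u u' t : (forall s, derivable_pt_lim u s (u' s)) -> (forall s, 0 < u s) ->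
  (exists x', derivable_pt_lim (fun s => Re (gam u s)) t x') /\
  (exists y', derivable_pt_lim (fun s => Im (gam u s)) t y').
Proof.
  intros Hd Hp.
  assert (Hu : ex_derive u t) by (exists (u' t); apply is_derive_Reals; auto).
  pose proof (denC_pos _ t (Hp t)) as Hden. unfold denC in Hden.
  split; apply dr_ex; unfold gam, denC, sT; simpl; auto_derive; repeat split; auto; lra.
Qed.

Lemma psi_deriv a K u u' t : -1 <= a <= 1 ->
  (forall s, derivable_pt_lim u s (u' s)) -> (forall s, 0 < u s) ->
  (forall s, (1 - a) * u s * u s - K * u s - (1 + a) / sT s = 0) ->
  exists d, derivable_pt_lim (psi a u) t d /\ 0 < d.
Proof.
  intros Ha Hd Hp HQ.
  assert (Hu : is_derive u t (u' t)) by (apply is_derive_Reals; auto).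
  assert (Hue : ex_derive u t) by (exists (u' t); auto).
  assert (HDu : Derive (fun x => u x) t = u' t) by (apply is_derive_unique; auto).
  pose proof (Hp t) as Hv. pose proof (sT_pos t) as Hs.
  assert (HQd : is_derive (fun s => (1 - a) * u s * u s - K * u s - (1 + a) / sT s) t
      (2 * (1 - a) * u t * u' t - K * u' t + (1 + a) * 2 * t / (sT t * sT t))).
  { unfold sT in *. auto_derive. repeat split; auto; lra. rewrite HDu. field. lra. }
  assert (HQ0 : is_derive (fun s => (1 - a) * u s * u s - K * u s - (1 + a) / sT s) t 0).
  { apply is_derive_ext with (fun _ => 0). intro s. rewrite HQ. auto. apply is_derive_Reals, derivable_pt_lim_const. }
  pose proof (is_derive_unique _ _ _ HQd) as E1. rewrite (is_derive_unique _ _ _ HQ0) in E1.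
  exists (((1 - a) * u t + (1 + a) / (u t * sT t)) / 4 +
      t * ((1 - a) * u' t - (1 + a) * (u' t * sT t + u t * (2 * t)) / ((u t * sT t) * (u t * sT t))) / 4).
  split.
  { apply is_derive_Reals. unfold psi, sT in *. auto_derive. repeat split; auto; nra.
    rewrite HDu. field. nra. }
  set (v := u t) in *. set (v' := u' t) in *. set (s := sT t) in *.
  set (p := 1 - a) in *. set (q := 1 + a) in *.
  assert (Hp0 : 0 <= p) by (unfold p; lra). assert (Hq0 : 0 <= q) by (unfold q; lra).
  assert (Hpq : p + q = 2) by (unfold p, q; lra).
  pose proof (HQ t) as HQt. fold v s p q in HQt.
  assert (HK : K = p * v - q / (v * s)).
  { apply Rmult_eq_reg_r with v. 2: lra.
    replace ((p * v - q / (v * s)) * v) with (p * v * v - q / s) by (field; lra). lra. }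
  assert (Hw : 0 <= q / (v * s)) by (apply Rmult_le_pos; [lra| left; apply Rinv_0_lt_compat; nra]).
  assert (HD : 0 < p * v + q / (v * s)).
  { destruct (Rle_lt_dec p 0). assert (q = 2) by lra. subst q.
    assert (0 < 2 / (v * s)) by (apply Rdiv_lt_0_compat; nra). nra. nra. }
  set (D := p * v + q / (v * s)) in *.
  assert (Hx : D * v' + q * 2 * t / (s * s) = 0).
  { assert (Hy : D * v' + q * 2 * t / (s * s) = 2 * p * v * v' - K * v' + q * 2 * t / (s * s))
      by (rewrite HK; unfold D; field; nra).
    rewrite Hy. lra. }
  assert (Hv' : v' = - (q * 2 * t / (s * s)) / D) .
  { apply Rmult_eq_reg_l with D; [| lra].
    replace (D * (- (q * 2 * t / (s * s)) / D)) with (- (q * 2 * t / (s * s))) by (field; lra). lra. }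
  rewrite Hv'.
  assert (HN : 0 < (p * v - q / (v * s)) * (p * v - q / (v * s)) * (s * s) + 4 * p * q).
  { destruct (Rle_lt_dec p 0).
    - assert (p = 0) by lra. assert (q = 2) by lra. rewrite H, H0.
      assert (0 < 2 / (v * s)) by (apply Rdiv_lt_0_compat; nra).
      replace ((0 * v - 2 / (v * s)) * (0 * v - 2 / (v * s)) * (s * s) + 4 * 0 * 2)
        with ((2 / (v * s)) * (2 / (v * s)) * (s * s)) by ring.
      apply Rmult_lt_0_compat; apply Rmult_lt_0_compat; lra.
    - destruct (Rle_lt_dec q 0).
      + assert (q = 0) by lra. rewrite H. replace (p * v - 0 / (v * s)) with (p * v) by (field; nra).
        assert (0 < p * v) by nra.
        replace (p * v * (p * v) * (s * s) + 4 * p * 0) with (p * v * (p * v) * (s * s)) by ring.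
        apply Rmult_lt_0_compat; apply Rmult_lt_0_compat; lra.
      + assert (0 <= (p * v - q / (v * s)) * (p * v - q / (v * s)) * (s * s)).
        { apply Rmult_le_pos; apply Rle_0_sqr. } nra. }
  replace (D / 4 +
    t * (p * (- (q * 2 * t / (s * s)) / D) - q * (- (q * 2 * t / (s * s)) / D * s + v * (2 * t)) / (v * s * (v * s))) / 4)
    with (((p * v - q / (v * s)) * (p * v - q / (v * s)) * (s * s) + 4 * p * q) / (4 * s * s * D)).
  apply Rdiv_lt_0_compat; auto. repeat apply Rmult_lt_0_compat; lra.
  unfold D. unfold s, sT in *. field.
  assert (0 < D * (v * (1 + t * t))) by (apply Rmult_lt_0_compat; [lra| apply Rmult_lt_0_compat; lra]).
  replace (D * (v * (1 + t * t))) with (p * v * (v * (1 + t * t)) + q) in H by (unfold D; field; lra).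
  repeat split; lra.
Qed.

Lemma incr_of_pos (f : R -> R) : (forall t, exists d, derivable_pt_lim f t d /\ 0 < d) ->
  forall x y, x < y -> f x < f y.
Proof.
  intros H x y Hxy.
  assert (Hd : forall c, derivable_pt_lim f c (Derive f c) /\ 0 < Derive f c).
  { intros c. destruct (H c) as [d [Hd Hp]].
    assert (Derive f c = d) by (apply is_derive_unique, is_derive_Reals; auto).
    rewrite H0; auto. }
  destruct (MVT_cor2 f (Derive f) x y Hxy) as [c [Hc _]].
  { intros c _. apply Hd. }
  destruct (Hd c) as [_ Hp]. nra.
Qed.

Lemma cont_of_der (f : R -> R) : (forall t, exists d, derivable_pt_lim f t d) -> continuity f.
Proof.
  intros H t. destruct (H t) as [d Hd]. apply derivable_continuous_pt. exists d. exact Hd.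
Qed.

Lemma Cnorm2_mul z w : Cnorm2 (Cmul z w) = Cnorm2 z * Cnorm2 w.
Proof. unfold Cnorm2, Cmul; simpl; ring. Qed.

Lemma curve_props a K u u' (h g h' g' : Cx -> Cx) :
  -1 <= a <= 1 ->
  analytic_on_E h h' -> analytic_on_E g g' ->
  (forall z, inE z -> Cnorm2 (g' z) < Cnorm2 (h' z)) ->
  (forall z, inE z -> Cadd (h z) (g z) = strip_map a z) ->
  (forall s, derivable_pt_lim u s (u' s)) -> (forall s, 0 < u s) ->
  (forall s, (1 - a) * u s * u s - K * u s - (1 + a) / sT s = 0) ->
  (forall s, inE (gam u s)) /\
  (forall s, Re (harm h g (gam u s)) = K / 4 + a / 2) /\
  (forall x y, x < y -> Im (harm h g (gam u x)) < Im (harm h g (gam u y))) /\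
  continuity (fun s => Im (harm h g (gam u s))).
Proof.
  intros Ha Hh Hg Hlt HF Hd Hp HQ.
  assert (HE : forall s, inE (gam u s)) by (intro s; apply gam_inE; auto).
  assert (HS : forall s, Cadd (h (gam u s)) (g (gam u s)) = mkC (K / 4 + a / 2) (psi a u s)).
  { intro s. rewrite HF by auto. apply gam_strip; auto. }
  assert (HRe : forall s, Re (harm h g (gam u s)) = K / 4 + a / 2).
  { intro s. pose proof (f_equal Re (HS s)) as E. simpl in E. unfold harm. simpl. exact E. }
  assert (Hder : forall t, exists d, derivable_pt_lim (fun s => Im (harm h g (gam u s))) t d /\ 0 < d).
  { intro t.
    destruct (gam_deriv u u' t Hd Hp) as [[x' Hx'] [y' Hy']].
    set (x := fun s => Re (gam u s)) in *. set (y := fun s => Im (gam u s)) in *.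
    assert (Egam : forall s, gam u s = mkC (x s) (y s)) by (intro s; reflexivity).
    assert (Hht : has_cderiv h (mkC (x t) (y t)) (h' (gam u t))) by (rewrite <- Egam; apply Hh; auto).
    assert (Hgt : has_cderiv g (mkC (x t) (y t)) (g' (gam u t))) by (rewrite <- Egam; apply Hg; auto).
    destruct (chain_rule h _ x y x' y' t Hx' Hy' Hht) as [HhR HhI].
    destruct (chain_rule g _ x y x' y' t Hx' Hy' Hgt) as [HgR HgI].
    set (A := Cmul (h' (gam u t)) (mkC x' y')) in *.
    set (B := Cmul (g' (gam u t)) (mkC x' y')) in *.
    assert (E0 : Re A + Re B = 0).
    { apply (uniqueness_limite (fun s => Re (h (mkC (x s) (y s))) + Re (g (mkC (x s) (y s)))) t).
      apply derivable_pt_lim_plus; auto.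
      apply is_derive_Reals. apply is_derive_ext with (fun _ => K / 4 + a / 2).
      intro s. pose proof (f_equal Re (HS s)) as E. simpl in E. rewrite <- E. reflexivity.
      apply is_derive_Reals, derivable_pt_lim_const. }
    destruct (psi_deriv a K u u' t Ha Hd Hp HQ) as [dp [Hdp Hdp0]].
    assert (E1 : Im A + Im B = dp).
    { apply (uniqueness_limite (fun s => Im (h (mkC (x s) (y s))) + Im (g (mkC (x s) (y s)))) t).
      apply derivable_pt_lim_plus; auto.
      apply is_derive_Reals. apply is_derive_ext with (psi a u).
      intro s. pose proof (f_equal Im (HS s)) as E. simpl in E. rewrite <- E. reflexivity.
      apply is_derive_Reals; auto. }
    exists (Im A - Im B). split.
    { apply is_derive_Reals. apply is_derive_ext with
        (fun s => Im (h (mkC (x s) (y s))) - Im (g (mkC (x s) (y s)))).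
      intro s. reflexivity.
      apply is_derive_Reals. apply derivable_pt_lim_minus; auto. }
    assert (Hn : 0 < Cnorm2 (mkC x' y')).
    { unfold Cnorm2; simpl. destruct (Rle_lt_dec (x' * x' + y' * y') 0); [|auto].
      assert (x' = 0) by nra. assert (y' = 0) by nra.
      unfold A, B, Cmul in E1; simpl in E1. subst. lra. }
    assert (HAB : Cnorm2 B < Cnorm2 A).
    { unfold A, B. rewrite !Cnorm2_mul. apply Rmult_lt_compat_r; auto. }
    unfold Cnorm2 in HAB. nra. }
  split; auto. split; auto. split.
  - apply incr_of_pos; auto.
  - apply cont_of_der. intro t. destruct (Hder t) as [d [Hd' _]]. eauto.
Qed.

Lemma inE_norm z : inE z -> Cnorm2 z < 1.
Proof.
  unfold inE, Cabs. intro H. destruct (Rlt_le_dec (Cnorm2 z) 1); auto.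
  apply sqrt_le_1_alt in r. rewrite sqrt_1 in r. lra.
Qed.

Lemma param a z : -1 <= a <= 1 -> inE z ->
  exists U t, 0 < U /\
   (1 - a) * U * U - (4 * (Re (strip_map a z) - a / 2)) * U - (1 + a) / sT t = 0 /\
   gam (fun _ => U) t = z.
Proof.
  intros Ha Hz. apply inE_norm in Hz. destruct z as [x y]. unfold Cnorm2 in Hz; simpl in Hz.
  set (d := (1 - x) * (1 - x) + y * y).
  assert (Hd : 0 < d) by (unfold d; nra).
  set (U := (1 - x * x - y * y) / d).
  assert (HU : 0 < U) by (apply Rdiv_lt_0_compat; lra).
  set (t := 2 * y / (1 - x * x - y * y)).
  assert (Hg : gam (fun _ => U) t = mkC x y).
  { unfold gam, denC, sT, U, t. assert (HA : 0 < 1 - x * x - y * y + ((1 - x) * (1 - x) + y * y)) by (unfold d in Hd; lra).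
    assert (HB : 0 < (1 - x * x - y * y + ((1 - x) * (1 - x) + y * y)) *
      (1 - x * x - y * y + ((1 - x) * (1 - x) + y * y)) + 2 * y * (2 * y)).
    { apply Rplus_lt_le_0_compat. apply Rmult_lt_0_compat; lra. nra. }
    unfold d in Hd.
    f_equal; unfold d; field; repeat split; lra. }
  exists U, t. split; auto. split; auto.
  pose proof (gam_C (fun _ => U) t HU) as HC. rewrite Hg in HC. simpl in HC.
  set (w := ((U, (U * t)%R) : C)) in *.
  assert (Hw1 : (w + 1)%C <> 0%C).
  { intro H. apply (f_equal fst) in H. unfold w in H. simpl in H. lra. }
  assert (Hw : w <> 0%C).
  { intro H. apply (f_equal fst) in H. unfold w in H. simpl in H. lra. }
  pose proof (S_w a w Hw Hw1) as HS. simpl in HS.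
  assert (E : toC (strip_map a (mkC x y)) =
     ((Complex.RtoC (1 - a) * w - Complex.RtoC (1 + a) / w) / 4 + Complex.RtoC a / 2)%C).
  { unfold strip_map. tc. rewrite HC. exact HS. }
  rewrite Re_toC, E. unfold w, sT. pose proof (sT_pos t). unfold sT in H.
  simpl. field. nra.
Qed.

Lemma build_u a K U0 t0 : -1 <= a <= 1 -> 0 < U0 ->
  (1 - a) * U0 * U0 - K * U0 - (1 + a) / sT t0 = 0 ->
  exists u u', (forall s, derivable_pt_lim u s (u' s)) /\ (forall s, 0 < u s) /\
    (forall s, (1 - a) * u s * u s - K * u s - (1 + a) / sT s = 0).
Proof.
  intros Ha HU HQ0.
  pose proof (sT_pos t0) as Hs0.
  assert (Hex : forall u : R -> R, (forall s, ex_derive u s) ->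
       exists u', forall s, derivable_pt_lim u s (u' s)).
  { intros u Hu. exists (Derive u). intro s. apply is_derive_Reals. apply Derive_correct; auto. }
  destruct (Rlt_le_dec a 1) as [Ha1|Ha1].
  - set (p := 1 - a) in *. set (q := 1 + a) in *.
    assert (Hp : 0 < p) by (unfold p; lra). assert (Hq : 0 <= q) by (unfold q; lra).
    assert (Harg : forall s, 0 < K * K + 4 * p * q / sT s /\ 0 < K + sqrt (K * K + 4 * p * q / sT s)).
    { intro s. pose proof (sT_pos s).
      destruct (Rle_lt_dec q 0).
      - assert (q = 0) by lra. rewrite H0 in *.
        assert (HK : K = p * U0).
        { apply Rmult_eq_reg_r with U0; [|lra]. replace (0 / sT t0) with 0 in HQ0 by (field; lra). nra. }
        replace (4 * p * 0 / sT s) with 0 by (field; lra).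
        rewrite HK. assert (0 < p * U0) by (apply Rmult_lt_0_compat; lra). rewrite Rplus_0_r, sqrt_square by lra. split; nra.
      - assert (0 < 4 * p * q / sT s) by (apply Rdiv_lt_0_compat; nra).
        assert (Hsq : Rabs K < sqrt (K * K + 4 * p * q / sT s)).
        { rewrite <- sqrt_Rsqr_abs. apply sqrt_lt_1_alt. unfold Rsqr. split; nra. }
        split. nra. pose proof (Rle_abs (- K)). rewrite Rabs_Ropp in H1. lra. }
    set (u := fun s => (K + sqrt (K * K + 4 * p * q / sT s)) / (2 * p)).
    destruct (Hex u) as [u' Hu'].
    { intro s. destruct (Harg s) as [H1 H2]. pose proof (sT_pos s). unfold u, sT in *.
      auto_derive. repeat split; lra. }
    exists u, u'. split; auto. split.
    + intro s. destruct (Harg s). unfold u. apply Rdiv_lt_0_compat; lra.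
    + intro s. destruct (Harg s) as [H1 H2]. pose proof (sT_pos s). unfold u.
      set (S := sqrt (K * K + 4 * p * q / sT s)).
      assert (HS : S * S = K * K + 4 * p * q / sT s) by (apply sqrt_sqrt; lra).
      replace (p * ((K + S) / (2 * p)) * ((K + S) / (2 * p)) - K * ((K + S) / (2 * p)))
        with ((S * S - K * K) / (4 * p)) by (field; lra).
      rewrite HS. field. lra.
  - assert (a = 1) by lra. subst a.
    assert (HK : K < 0).
    { assert (0 < 2 / sT t0) by (apply Rdiv_lt_0_compat; lra).
      replace ((1 - 1) * U0 * U0 - K * U0 - (1 + 1) / sT t0) with (- (K * U0) - 2 / sT t0) in HQ0 by (field; lra).
      nra. }
    set (u := fun s => - 2 / (K * sT s)).
    destruct (Hex u) as [u' Hu'].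
    { intro s. pose proof (sT_pos s). unfold u, sT in *.
      auto_derive. repeat split; nra. }
    exists u, u'. split; auto. split.
    + intro s. pose proof (sT_pos s). unfold u.
      replace (- 2 / (K * sT s)) with (2 / ((- K) * sT s)) by (field; nra).
      apply Rdiv_lt_0_compat; nra.
    + intro s. pose proof (sT_pos s). unfold u. field. nra.
Qed.

Lemma root_uniq a K s x y : -1 <= a <= 1 -> 0 < x -> 0 < y ->
  (1 - a) * x * x - K * x - (1 + a) / sT s = 0 ->
  (1 - a) * y * y - K * y - (1 + a) / sT s = 0 -> x = y.
Proof.
  intros Ha Hx Hy E1 E2. pose proof (sT_pos s) as Hs.
  set (c := (1 + a) / sT s) in *.
  assert (Hc : 0 <= c) by (unfold c; apply Rmult_le_pos; [lra| left; apply Rinv_0_lt_compat; lra]).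
  destruct (Req_dec x y) as [|Hne]; auto. exfalso.
  assert (HK : (1 - a) * (x + y) = K).
  { apply Rmult_eq_reg_r with (x - y). 2: intro; apply Hne; lra. nra. }
  assert (Hxy : (1 - a) * x * y = - c) by nra.
  assert (Hp0 : 1 - a = 0).
  { assert (0 < x * y) by nra. nra. }
  assert (c = 0) by nra.
  unfold c in H. assert (1 + a = 0).
  { apply Rmult_eq_reg_r with (/ sT s). rewrite Rmult_0_l. exact H. apply Rinv_neq_0_compat; lra. }
  lra.
Qed.

Lemma gam_val u t U : u t = U -> gam u t = gam (fun _ => U) t.
Proof. intro H. unfold gam. rewrite H. reflexivity. Qed.

Lemma Cx_ext z w : Re z = Re w -> Im z = Im w -> z = w.
Proof. destruct z, w; simpl; intros; subst; auto. Qed.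

Lemma core a (h g h' g' : Cx -> Cx) :
  -1 <= a <= 1 ->
  analytic_on_E h h' -> analytic_on_E g g' ->
  (forall z, inE z -> Cnorm2 (g' z) < Cnorm2 (h' z)) ->
  (forall z, inE z -> Cadd (h z) (g z) = strip_map a z) ->
  (forall z1 z2, inE z1 -> inE z2 -> harm h g z1 = harm h g z2 -> z1 = z2) /\
  convex_imag_dir (image_E (harm h g)).
Proof.
  intros Ha Hh Hg Hlt HF.
  assert (HReS : forall z, inE z -> Re (harm h g z) = Re (strip_map a z)).
  { intros z Hz. rewrite <- HF by auto. reflexivity. }
  assert (Key : forall z1 z2, inE z1 -> inE z2 -> Re (harm h g z1) = Re (harm h g z2) ->
     exists u t1 t2, z1 = gam u t1 /\ z2 = gam u t2 /\
       (forall s, inE (gam u s)) /\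
       (forall s, Re (harm h g (gam u s)) = Re (harm h g z1)) /\
       (forall x y, x < y -> Im (harm h g (gam u x)) < Im (harm h g (gam u y))) /\
       continuity (fun s => Im (harm h g (gam u s)))).
  { intros z1 z2 H1 H2 HR.
    destruct (param a z1 Ha H1) as [U1 [t1 [HU1 [HQ1 Hg1]]]].
    destruct (param a z2 Ha H2) as [U2 [t2 [HU2 [HQ2 Hg2]]]].
    rewrite !HReS in HR by auto. rewrite <- HR in HQ2.
    set (K := 4 * (Re (strip_map a z1) - a / 2)) in *.
    destruct (build_u a K U1 t1 Ha HU1 HQ1) as [u [u' [Hd [Hp HQ]]]].
    destruct (curve_props a K u u' h g h' g' Ha Hh Hg Hlt HF Hd Hp HQ) as [HE [HRe [Hinc Hc]]].
    assert (E1 : u t1 = U1) by (eapply root_uniq; eauto).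
    assert (E2 : u t2 = U2) by (eapply root_uniq; eauto).
    assert (Z1 : z1 = gam u t1) by (rewrite (gam_val u t1 U1 E1); auto).
    assert (Z2 : z2 = gam u t2) by (rewrite (gam_val u t2 U2 E2); auto).
    exists u, t1, t2. repeat split; auto.
    intro s. rewrite HRe, Z1, HRe. reflexivity. }
  split.
  - intros z1 z2 H1 H2 Heq.
    destruct (Key z1 z2 H1 H2 (f_equal Re Heq)) as [u [t1 [t2 [Z1 [Z2 [_ [_ [Hinc _]]]]]]]].
    assert (HI : Im (harm h g (gam u t1)) = Im (harm h g (gam u t2))).
    { rewrite <- Z1, <- Z2, Heq. reflexivity. }
    destruct (Rtotal_order t1 t2) as [Hl|[He|Hl]].
    + specialize (Hinc _ _ Hl). lra.
    + rewrite Z1, Z2, He. reflexivity.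
    + specialize (Hinc _ _ Hl). lra.
  - intros w1 w2 [z1 [H1 E1]] [z2 [H2 E2]] HR s Hs.
    subst w1 w2.
    destruct (Key z1 z2 H1 H2 HR) as [u [t1 [t2 [Z1 [Z2 [HE [HRe [_ Hc]]]]]]]].
    set (yv := s * Im (harm h g z1) + (1 - s) * Im (harm h g z2)).
    destruct (IVT_gen (fun s => Im (harm h g (gam u s))) t1 t2 yv Hc) as [tau [_ Htau]].
    { cbv beta. rewrite <- Z1, <- Z2. unfold yv, Rmin, Rmax.
      destruct (Rle_dec (Im (harm h g z1)) (Im (harm h g z2))); destruct Hs; split; nra. }
    exists (gam u tau). split; auto.
    apply Cx_ext.
    + rewrite HRe. reflexivity.
    + exact Htau.
Qed.

Lemma key_ineq (t : R) (H1 H2 W1 W2 : Cx) : 0 <= t <= 1 ->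
  Cnorm2 W1 < 1 -> Cnorm2 W2 < 1 -> 0 < Cnorm2 H1 -> 0 < Cnorm2 H2 ->
  0 < Re (Cmul (Csub Cx1 (Cmul W1 (Defs.Cconj W2))) (Cmul H1 (Defs.Cconj H2))) ->
  Cnorm2 (Cadd (Cmul (Defs.RtoC t) (Cmul W1 H1)) (Cmul (Defs.RtoC (1 - t)) (Cmul W2 H2))) <
  Cnorm2 (Cadd (Cmul (Defs.RtoC t) H1) (Cmul (Defs.RtoC (1 - t)) H2)).
Proof.
  intros Ht HW1 HW2 HH1 HH2 HZ.
  set (X := Cnorm2 H1 * (1 - Cnorm2 W1)). set (Y := Cnorm2 H2 * (1 - Cnorm2 W2)).
  set (Z := Re (Cmul (Csub Cx1 (Cmul W1 (Defs.Cconj W2))) (Cmul H1 (Defs.Cconj H2)))) in *.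
  assert (HX : 0 < X) by (unfold X; nra). assert (HY : 0 < Y) by (unfold Y; nra).
  assert (E : Cnorm2 (Cadd (Cmul (Defs.RtoC t) H1) (Cmul (Defs.RtoC (1 - t)) H2)) -
     Cnorm2 (Cadd (Cmul (Defs.RtoC t) (Cmul W1 H1)) (Cmul (Defs.RtoC (1 - t)) (Cmul W2 H2)))
     = t * t * X + (1 - t) * (1 - t) * Y + 2 * t * (1 - t) * Z).
  { unfold X, Y, Z. destruct H1, H2, W1, W2. unfold Cnorm2, Cadd, Cmul, Csub, Defs.Cconj, Cx1, Defs.RtoC; simpl.
    ring. }
  assert (0 < t * t * X + (1 - t) * (1 - t) * Y + 2 * t * (1 - t) * Z).
  { destruct (Req_dec t 0).
    - subst. nra.
    - assert (0 < t) by lra.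
      assert (0 < t * t * X) by (apply Rmult_lt_0_compat; nra).
      assert (0 <= (1 - t) * (1 - t) * Y) by (apply Rmult_le_pos; nra).
      assert (0 <= 2 * t * (1 - t) * Z) by (apply Rmult_le_pos; nra).
      lra. }
  lra.
Qed.

Lemma Cnorm2_ge0 z : 0 <= Cnorm2 z.
Proof. unfold Cnorm2. nra. Qed.

Lemma Cabs_div_lt1 x y : Cnorm2 x < Cnorm2 y -> Cabs (Cdiv x y) < 1.
Proof.
  intros H. pose proof (Cnorm2_ge0 x).
  assert (Hy : y <> Cx0).
  { intro E. subst. unfold Cnorm2, Cx0, Defs.RtoC in H, H0; simpl in H. lra. }
  assert (HyC : toC y <> 0%C).
  { intro E. apply Hy. apply toC_inj. rewrite E. reflexivity. }
  rewrite Cabs_toC, toC_div, Cmod_div by auto. rewrite <- !Cabs_toC.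
  unfold Cabs. apply div_lt1. apply sqrt_lt_R0. lra.
  apply sqrt_lt_1_alt. lra.
Qed.

Lemma not_one_sq z : inE z -> (1 - toC z * toC z)%C <> 0%C.
Proof.
  intros Hz E. apply inE_norm in Hz.
  assert (E2 : (toC z * toC z)%C = 1%C).
  { replace (toC z * toC z)%C with (1 - (1 - toC z * toC z))%C by ring. rewrite E. ring. }
  apply (f_equal Cmod) in E2. rewrite Cmod_mult, Cmod_1 in E2.
  rewrite <- Cabs_toC in E2. unfold Cabs in E2.
  assert (Cnorm2 z = 1).
  { rewrite <- (sqrt_sqrt (Cnorm2 z)) by apply Cnorm2_ge0. rewrite E2. ring. }
  lra.
Qed.

Theorem mainTheorem9 :
  forall (a1 a2 : R) (h1 g1 h1' g1' h2 g2 h2' g2' : Cx -> Cx),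
    -1 <= a1 <= 1 -> -1 <= a2 <= 1 ->
    in_SH h1 g1 h1' g1' -> in_SH h2 g2 h2' g2' ->
    (forall z, inE z -> Cadd (h1 z) (g1 z) = strip_map a1 z) ->
    (forall z, inE z -> Cadd (h2 z) (g2 z) = strip_map a2 z) ->
    (forall z, inE z ->
       0 < Re (Cmul (Csub Cx1 (Cmul (dilat h1' g1' z) (Cconj (dilat h2' g2' z))))
                    (Cmul (h1' z) (Cconj (h2' z))))) ->
    forall t, 0 <= t <= 1 ->
      in_SH (lincomb t h1 h2) (lincomb t g1 g2)
            (lincomb t h1' h2') (lincomb t g1' g2') /\
      convex_imag_dir (image_E (harm (lincomb t h1 h2) (lincomb t g1 g2))).
Proof.
  intros a1 a2 h1 g1 h1' g1' h2 g2 h2' g2' Ha1 Ha2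
    [Ah1 [Ag1 [Nh1 [Dl1 [_ [Z1 O1]]]]]] [Ah2 [Ag2 [Nh2 [Dl2 [_ [Z2 O2]]]]]] HF1 HF2 HRe t Ht.
  set (a := t * a1 + (1 - t) * a2).
  assert (Ha : -1 <= a <= 1) by (unfold a; nra).
  assert (Ah : analytic_on_E (lincomb t h1 h2) (lincomb t h1' h2')).
  { intros z Hz. unfold lincomb. apply (cderiv_lin h1 h2); auto. }
  assert (Ag : analytic_on_E (lincomb t g1 g2) (lincomb t g1' g2')).
  { intros z Hz. unfold lincomb. apply (cderiv_lin g1 g2); auto. }
  assert (Hdil : forall (h' g' : Cx -> Cx) z, h' z <> Cx0 -> g' z = Cmul (dilat h' g' z) (h' z)).
  { intros h' g' z Hn. apply toC_inj. unfold dilat. tc.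
    assert (toC (h' z) <> 0%C) by (intro E; apply Hn; apply toC_inj; rewrite E; reflexivity).
    field. auto. }
  assert (Hpos : forall (h' : Cx -> Cx) z, h' z <> Cx0 -> 0 < Cnorm2 (h' z)).
  { intros h' z Hn. pose proof (Cnorm2_ge0 (h' z)). destruct (Req_dec (Cnorm2 (h' z)) 0); [|lra].
    exfalso. apply Hn. destruct (h' z) as [r i]. unfold Cnorm2 in *; simpl in *.
    assert (r = 0) by nra. assert (i = 0) by nra. subst. reflexivity. }
  assert (Hlt : forall z, inE z -> Cnorm2 (lincomb t g1' g2' z) < Cnorm2 (lincomb t h1' h2' z)).
  { intros z Hz. unfold lincomb. rewrite (Hdil h1' g1' z), (Hdil h2' g2' z) by auto.
    apply key_ineq; [auto | apply inE_norm, Dl1, Hz | apply inE_norm, Dl2, Hz | apply Hpos, Nh1, Hz | apply Hpos, Nh2, Hz | apply HRe, Hz]. }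
  assert (HF : forall z, inE z ->
     Cadd (lincomb t h1 h2 z) (lincomb t g1 g2 z) = strip_map a z).
  { intros z Hz. pose proof (HF1 z Hz) as E1. pose proof (HF2 z Hz) as E2.
    apply (f_equal toC) in E1. apply (f_equal toC) in E2.
    unfold strip_map in *. apply toC_inj. unfold lincomb. tc. tc. tc.
    pose proof (not_one_sq z Hz).
    replace (Complex.RtoC t * toC (h1 z) + Complex.RtoC (1 - t) * toC (h2 z) +
      (Complex.RtoC t * toC (g1 z) + Complex.RtoC (1 - t) * toC (g2 z)))%C with
      (Complex.RtoC t * (toC (h1 z) + toC (g1 z)) + Complex.RtoC (1 - t) * (toC (h2 z) + toC (g2 z)))%C
      by ring.
    rewrite toC_add in E1, E2. rewrite E1, E2. tc. unfold a. rewrite !RtoC_plus, !RtoC_mult, !RtoC_minus. field. auto. }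
  destruct (core a _ _ _ _ Ha Ah Ag Hlt HF) as [Hinj Hconv].
  split; [|exact Hconv].
  split; [exact Ah|]. split; [exact Ag|].
  assert (HN : forall z, inE z -> lincomb t h1' h2' z <> Cx0).
  { intros z Hz E. specialize (Hlt z Hz). rewrite E in Hlt.
    pose proof (Cnorm2_ge0 (lincomb t g1' g2' z)) as HH. replace (Cnorm2 Cx0) with 0 in Hlt by (unfold Cnorm2, Cx0, Defs.RtoC; simpl; ring).
    lra. }
  split; [exact HN|].
  split. { intros z Hz. unfold dilat. apply Cabs_div_lt1. auto. }
  split; [exact Hinj|].
  split.
  - apply Cx_ext; unfold harm, lincomb; simpl.
    + pose proof (f_equal Re Z1) as R1. pose proof (f_equal Re Z2) as R2.
      unfold harm in R1, R2; simpl in R1, R2. nra.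
    + pose proof (f_equal Im Z1) as R1. pose proof (f_equal Im Z2) as R2.
      unfold harm in R1, R2; simpl in R1, R2. nra.
  - apply toC_inj. unfold lincomb. tc. rewrite O1, O2. tc. rewrite RtoC_minus. ring.
Qed.
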